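(* Let $n\geqslant 2$ and let $\alpha$ be a partial cofinite isometry of $\mathbb{N}^n$ such that for every $i\in\{1,\ldots,n\}$ there is some $\mathbf{m}_i\in\operatorname{dom}\alpha\setminus\{\mathbf{1}\}$ (with $m\in\mathbb{N}$) satisfying $(\mathbf{m}_i)\alpha\in\vec{\mathbf{1}}_i$. Then $(\mathbf{x}_i)\alpha=\mathbf{x}_i$ for every $i\in\{1,\ldots,n\}$ and every $\mathbf{x}_i\in\operatorname{dom}\alpha\cap\vec{\mathbf{1}}_i$.
   Context: $\mathbb{N}=\{1,2,3,\ldots\}$ and $\mathbb{N}^n$ carries the Euclidean metric $d$. A partial isometry of $\mathbb{N}^n$ is an injective partial map $\alpha\colon\mathbb{N}^n\rightharpoonup\mathbb{N}^n$ with $d((\mathbf{x})\alpha,(\mathbf{y})\alpha)=d(\mathbf{x},\mathbf{y})$ for all $\mathbf{x},\mathbf{y}\in\operatorname{dom}\alpha$; it is cofinite if $\mathbb{N}^n\setminus\operatorname{dom}\alpha$ and $\mathbb{N}^n\setminus\operatorname{ran}\alpha$ are finite. Maps are written on the right. $\mathbf{1}=(1,\ldots,1)$; for $k\in\mathbb{N}$ and $j\in\{1,\ldots,n\}$, $\mathbf{k}_j$ is the point whose $j$-th coordinate is $k$ and all other coordinates equal $1$; $\vec{\mathbf{1}}_j=\{\mathbf{k}_j\colon k\in\mathbb{N}\}$. *)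

(* Defs.v *)
From HB Require Import structures.
From mathcomp Require Import all_boot all_order all_algebra.
Set Implicit Arguments. Unset Strict Implicit. Unset Printing Implicit Defensive.
Import Order.TTheory GRing.Theory Num.Theory.

(* A point with n natural coordinates (finite functions: extensional equality). *)
Definition pt (n : nat) := {ffun 'I_n -> nat}.

(* membership in N^n, with N = {1,2,3,...} *)
Definition inN (n : nat) (x : pt n) : bool := [forall i, 0 < x i].

Definition dist2 (n : nat) (x y : pt n) : int :=
  (\sum_(i < n) ((x i)%:Z - (y i)%:Z) ^+ 2)%R.

(* A partial map N^n -/-> N^n is represented as alpha : pt n -> option (pt n);
   its domain/range consist of points of N^n only. *)
Definition in_dom (n : nat) (alpha : pt n -> option (pt n)) (x : pt n) : Prop :=
  inN x /\ exists y, alpha x = Some y.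
Definition in_ran (n : nat) (alpha : pt n -> option (pt n)) (y : pt n) : Prop :=
  exists x, in_dom alpha x /\ alpha x = Some y.

Definition partial_isometry (n : nat) (alpha : pt n -> option (pt n)) : Prop :=
  (forall x y, alpha x = Some y -> inN x /\ inN y) /\
  (forall x x' y, alpha x = Some y -> alpha x' = Some y -> x = x') /\
  (* distance preserving (d(a,b) = d(c,d) iff d(a,b)^2 = d(c,d)^2, d >= 0) *)
  (forall x x' y y', alpha x = Some y -> alpha x' = Some y' ->
     dist2 y y' = dist2 x x').

Definition cofinite (n : nat) (alpha : pt n -> option (pt n)) : Prop :=
  (exists s : seq (pt n), forall x, inN x -> ~ in_dom alpha x -> x \in s) /\
  (exists s : seq (pt n), forall y, inN y -> ~ in_ran alpha y -> y \in s).

Definition one_pt (n : nat) : pt n := [ffun => 1%N].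
Definition kpt (n : nat) (k : nat) (j : 'I_n) : pt n :=
  [ffun i => if i == j then k else 1%N].
Definition on_ray (n : nat) (j : 'I_n) (x : pt n) : Prop :=
  exists k, (0 < k)%N /\ x = kpt k j.

(* Main.v *)
Require Import Defs.
From HB Require Import structures.
From mathcomp Require Import all_boot all_order all_algebra.
From mathcomp Require Import zify ring lra.
From Stdlib Require Import Classical.
Set Implicit Arguments. Unset Strict Implicit. Unset Printing Implicit Defensive.
Import Order.TTheory GRing.Theory Num.Theory.

Definition Bnd n (s : seq (pt n)) : nat :=
  foldr (fun (p : pt n) acc => (\sum_(i < n) p i) + acc)%N 1%N s.

Lemma Bnd_ge1 n (s : seq (pt n)) : (1 <= Bnd s)%N.
Proof. elim: s => //= p s IH; lia. Qed.

Lemma Bnd_lt n (s : seq (pt n)) p i : p \in s -> (p i < Bnd s)%N.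
Proof.
elim: s => //= q s IH; rewrite inE => /orP [/eqP -> | /IH]; last by rewrite /Bnd; lia.

have : (q i <= \sum_(k < n) q k)%N by rewrite (bigD1 i) //= leq_addr.
have := Bnd_ge1 s; rewrite /Bnd => A B; rewrite -addn1; exact: leq_add B A.
Qed.

Lemma sq_expand n (u f : 'I_n -> int) :
  (\sum_(k < n) (u k - f k) ^+ 2 =
   \sum_(k < n) u k ^+ 2 - 2 * \sum_(k < n) u k * f k + \sum_(k < n) f k ^+ 2)%R.
Proof.
rewrite mulr_sumr -sumrB -big_split /=; apply: eq_bigr => k _; ring.
Qed.

Lemma unit_vec n (f : 'I_n -> int) : (\sum_(k < n) f k ^+ 2 = 1)%R ->
  exists k0, (f k0 = 1 \/ f k0 = -1)%R /\ forall l, l != k0 -> f l = 0%R.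
Proof.
move=> H.
have [k0 Hk0] : exists k0, f k0 != 0%R.
  apply/existsP; apply: contraT; rewrite negb_exists => /forallP H0.
  move: H; rewrite big1 // => k _; have := H0 k; rewrite negbK => /eqP ->; by [].
exists k0.
move: H; rewrite (bigD1 k0) //= => H.
have Hr : (0 <= \sum_(k < n | k != k0) f k ^+ 2)%R by apply: sumr_ge0 => k _; apply: sqr_ge0.
have Hk : (1 <= f k0 ^+ 2)%R.
  move: Hk0; case: (f k0) => m; lia.
have Hrest : (\sum_(k < n | k != k0) f k ^+ 2 = 0)%R.
  move: H Hr Hk; move: (\sum_(k < n | k != k0) f k ^+ 2)%R (f k0 ^+ 2)%R => S F. lia.
  have HF : (f k0 ^+ 2 = 1)%R.
  move: H Hr Hk; move: (\sum_(k < n | k != k0) f k ^+ 2)%R (f k0 ^+ 2)%R => S F. lia.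
split.
  move: HF.
  move: Hk0; case: (f k0) => m; nia.
move=> l Hl.
have /eqP := Hrest; rewrite psumr_eq0; last by move=> k _; apply: sqr_ge0.
move=> /allP /(_ l (mem_index_enum l)); rewrite Hl /= sqrf_eq0 => /eqP; by [].
Qed.

Lemma other_idx n : (2 <= n)%N -> forall j : 'I_n, exists l, l != j.
Proof.
move=> Hn j; have h0 : (0 < n)%N by lia. have h1 : (1 < n)%N by lia.
case: (eqVneq j (Ordinal h0)) => [->|Hj].
  by exists (Ordinal h1); apply/eqP => /(congr1 val).
by exists (Ordinal h0); rewrite eq_sym.
Qed.

Theorem lemma2p8 (n : nat) (alpha : pt n -> option (pt n)) :
  (2 <= n)%N ->
  partial_isometry alpha ->
  cofinite alpha ->
  (forall i : 'I_n, exists m : nat,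
      (0 < m)%N /\ in_dom alpha (kpt m i) /\ kpt m i <> one_pt n /\
      exists y, alpha (kpt m i) = Some y /\ on_ray i y) ->
  forall (i : 'I_n) (x : pt n), on_ray i x -> in_dom alpha x -> alpha x = Some x.
Proof.
move=> Hn [Hval [_ Hiso]] [[sD HD] [sR HR]] Hray.
have dom : forall x, inN x -> (exists i, Bnd sD <= x i)%N -> exists y, alpha x = Some y.
  move=> x Hx [i Hi]; case E: (alpha x) => [y|]; first by exists y.
  exfalso; have H : ~ in_dom alpha x by case=> _ [y]; rewrite E.
  by have := @Bnd_lt _ _ x i (HD x Hx H); rewrite ltnNge Hi.
have ran : forall y, inN y -> (exists i, Bnd sR <= y i)%N -> exists x, alpha x = Some y.
  move=> y Hy [i Hi]; case: (Classical_Prop.classic (in_ran alpha y)) => [[x [_ Hx]]|H].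
    by exists x.
  by have := @Bnd_lt _ _ y i (HR y Hy H); rewrite ltnNge Hi.
set K := Bnd sD.
have HK : (1 <= K)%N := Bnd_ge1 sD.
suff coord : forall j x y, alpha x = Some y -> y j = x j.
  move=> i x _ [_ [y Hy]]; rewrite Hy; congr Some; apply/ffunP => j; exact: coord j x y Hy.
move=> j.
pose c0 : pt n := [ffun => K].
pose c1 : pt n := [ffun l => if l == j then K.+1 else K].
have [a Ha] : exists a, alpha c0 = Some a.
  apply: dom; first by apply/forallP => l; rewrite ffunE.
  by exists j; rewrite ffunE.
have [e He] : exists e, alpha c1 = Some e.
  apply: dom; first by apply/forallP => l; rewrite ffunE; case: (_ == _); lia.
  by exists j; rewrite ffunE eqxx.
pose f k := ((e k)%:Z - (a k)%:Z)%R.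
have Hf : (\sum_(k < n) f k ^+ 2 = 1)%R.
  have := Hiso _ _ _ _ He Ha; rewrite /dist2 => ->.
  rewrite (bigD1 j) //= big1 => [|l Hl]; rewrite !ffunE ?eqxx ?(negbTE Hl).
    by rewrite addr0 -addn1 PoszD addrAC subrr add0r expr1n.
  by rewrite subrr expr0n.
have [k0 [Hs Hz]] := unit_vec Hf.
have form : forall x y, alpha x = Some y ->
    (((y k0)%:Z - (a k0)%:Z) * f k0 = (x j)%:Z - K%:Z)%R.
  move=> x y Hxy.
  have H1 := Hiso _ _ _ _ Hxy Ha. have H2 := Hiso _ _ _ _ Hxy He.
  move: H1 H2; rewrite /dist2.
  pose u k := ((y k)%:Z - (a k)%:Z)%R.
  pose v k := ((x k)%:Z - K%:Z)%R.
  pose g k : int := if k == j then 1%R else 0%R.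
  have -> : (\sum_(k < n) ((y k)%:Z - (e k)%:Z) ^+ 2 = \sum_(k < n) (u k - f k) ^+ 2)%R.
    by apply: eq_bigr => k _; rewrite /u /f; congr (_ ^+ 2)%R; ring.
  have -> : (\sum_(k < n) ((x k)%:Z - (c1 k)%:Z) ^+ 2 = \sum_(k < n) (v k - g k) ^+ 2)%R.
    by apply: eq_bigr => k _; rewrite /v /g !ffunE; case: (k == j); lia.
  have -> : (\sum_(k < n) ((x k)%:Z - (c0 k)%:Z) ^+ 2 = \sum_(k < n) (v k) ^+ 2)%R.
    by apply: eq_bigr => k _; rewrite /v !ffunE.
  have -> : (\sum_(k < n) ((y k)%:Z - (a k)%:Z) ^+ 2 = \sum_(k < n) (u k) ^+ 2)%R by [].
  rewrite (sq_expand u f) (sq_expand v g) Hf.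
  have -> : (\sum_(k < n) g k ^+ 2 = 1)%R.
    by rewrite (bigD1 j) //= big1 => [|l Hl]; rewrite /g ?eqxx ?(negbTE Hl) ?addr0 ?expr0n.
  have -> : (\sum_(k < n) v k * g k = v j)%R.
    by rewrite (bigD1 j) //= big1 => [|l Hl]; rewrite /g ?eqxx ?(negbTE Hl) ?addr0 ?mulr1 ?mulr0.
  have -> : (\sum_(k < n) u k * f k = u k0 * f k0)%R.
    by rewrite (bigD1 k0) //= big1 ?addr0 // => l Hl; rewrite Hz // mulr0.
  change (((y k0)%:Z - (a k0)%:Z) * f k0)%R with (u k0 * f k0)%R.
  change ((x j)%:Z - K%:Z)%R with (v j).
  move: (u k0 * f k0)%R (v j) (\sum_(k < n) u k ^+ 2)%R (\sum_(k < n) v k ^+ 2)%R.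
  move=> X Y Z W; lia.
have Hpos : f k0 = 1%R.
  case: Hs => // Hm; exfalso.
  pose x : pt n := [ffun l => if l == j then (K + a k0)%N else K].
  have [y Hy] : exists y, alpha x = Some y.
    apply: dom; first by apply/forallP => l; rewrite ffunE; case: (_ == _); lia.
    by exists j; rewrite ffunE eqxx; lia.
  have := form _ _ Hy; rewrite Hm /x ffunE eqxx.
  have := (Hval _ _ Hy).2 => /forallP /(_ k0). lia.
have form1 : forall x y, alpha x = Some y ->
    ((y k0)%:Z = (x j)%:Z + (a k0)%:Z - K%:Z)%R.
  by move=> x y H; have := form _ _ H; rewrite Hpos mulr1; lia.
have cge : (K <= a k0)%N.
  have [l Hl] := other_idx Hn j.
  pose x : pt n := [ffun t => if t == j then 1%N else K].
  have [y Hy] : exists y, alpha x = Some y.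
    apply: dom; first by apply/forallP => t; rewrite ffunE; case: (_ == _); lia.
    by exists l; rewrite ffunE (negbTE Hl).
  have := form1 _ _ Hy; rewrite /x ffunE eqxx.
  have := (Hval _ _ Hy).2 => /forallP /(_ k0). lia.
have cle : (a k0 <= K)%N.
  have [l Hl] := other_idx Hn k0.
  pose y : pt n := [ffun t => if t == k0 then 1%N else Bnd sR].
  have HsR := Bnd_ge1 sR.
  have [x Hx] : exists x, alpha x = Some y.
    apply: ran; first by apply/forallP => t; rewrite ffunE; case: (_ == _); lia.
    by exists l; rewrite ffunE (negbTE Hl).
  have := form1 _ _ Hx; rewrite /y ffunE eqxx.
  have := (Hval _ _ Hx).1 => /forallP /(_ j). lia.
have Hfix : forall x y, alpha x = Some y -> y k0 = x j.
  by move=> x y H; have := form1 _ _ H; lia.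
have [m [Hm [_ [Hne [y0 [Hy0 [k [_ Ey0]]]]]]]] := Hray j.
have := Hfix _ _ Hy0; rewrite Ey0 !ffunE eqxx.
case: (eqVneq k0 j) => [Ek|Nk].
  by move=> _ x y H; move: (Hfix x y H); rewrite Ek.
move=> Hm1; exfalso; apply: Hne; apply/ffunP => t.
by rewrite !ffunE; case: (t == j).
Qed.
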